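(* Let $\mathcal{A}$ be a finite abelian group with $|\mathcal{A}|\ge 3$. Let $M_2(p_1,p_2,p_3)$ be the graph obtained from the complete graph on $\{v_1,v_2,v_3,v_4\}$ by deleting the edge $v_2v_4$ and attaching $p_i\ge 0$ pendant vertices to $v_i$ for $i=1,2,3$, and assume $M_2(p_1,p_2,p_3)$ has diameter $3$. Then $M_2(p_1,p_2,p_3)$ is $\mathcal{A}$-vertex magic if and only if $p_1=p_3=0$, $p_2\ge 2$, and $\mathcal{A}$ contains a square element.
   Context: An element $g\in\mathcal{A}$ is a square if $g\neq 0$ and $g=2h$ for some $h\in\mathcal{A}$. A map $\ell:V(G)\to\mathcal{A}\setminus\{0\}$ is an $\mathcal{A}$-vertex magic labeling if there is $\mu\in\mathcal{A}$ with $\sum_{u\in N(v)}\ell(u)=\mu$ for every vertex $v$; $G$ is $\mathcal{A}$-vertex magic if such a labeling exists. *)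

(* Defs.v *)
From HB Require Import structures.
From mathcomp Require Import all_boot all_order all_algebra.
Set Implicit Arguments. Unset Strict Implicit. Unset Printing Implicit Defensive.
Import GRing.Theory.
Local Open Scope ring_scope.

(* A simple graph is a symmetric irreflexive relation e on a finType T. *)

Fixpoint reach (T : finType) (e : rel T) (k : nat) (u v : T) : bool :=
  match k with
  | 0%N => u == v
  | k'.+1 => reach e k' u v || [exists w, reach e k' u w && e w v]
  end.

Definition has_diameter (T : finType) (e : rel T) (d : nat) : Prop :=
  (forall u v, reach e d u v) /\ (exists u v, ~~ reach e d.-1 u v).

Definition is_square (A : zmodType) (g : A) : Prop :=
  g != 0 /\ exists h : A, g = h *+ 2.

Definition vertex_magic (T : finType) (e : rel T) (A : zmodType) : Prop :=
  exists l : T -> A, (forall v, l v != 0) /\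
    exists mu : A, forall v, \sum_(u | e v u) l u = mu.

(* Vertices of M_2(p1,p2,p3): core vertices v1..v4 as inl 0..3, and
   pendants attached to v1, v2, v3 respectively. *)
Definition M2V (p1 p2 p3 : nat) : finType :=
  ('I_4 + ('I_p1 + ('I_p2 + 'I_p3)))%type.

(* index of the core vertex a pendant is attached to (0-based: v1=0,v2=1,v3=2) *)
Definition pend_anchor (p1 p2 p3 : nat) (x : 'I_p1 + ('I_p2 + 'I_p3)) : nat :=
  match x with
  | inl _ => 0%N
  | inr (inl _) => 1%N
  | inr (inr _) => 2%N
  end.

Definition M2adj (p1 p2 p3 : nat) : rel (M2V p1 p2 p3) :=
  fun x y =>
    match x, y with
    | inl i, inl j =>
        (i != j) && ~~ (((i == 1 :> nat) && (j == 3 :> nat))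
                        || ((i == 3 :> nat) && (j == 1 :> nat)))
    | inl i, inr q => (i == pend_anchor q :> nat)
    | inr q, inl j => (j == pend_anchor q :> nat)
    | inr _, inr _ => false
    end.

(* Main.v *)
Require Import Defs.
From HB Require Import structures.
From mathcomp Require Import all_boot all_order all_algebra.
Import GRing.Theory.
Local Open Scope ring_scope.

Lemma sumM2 (A : zmodType) p1 p2 p3 (P : pred (M2V p1 p2 p3)) (F : M2V p1 p2 p3 -> A) :
  \sum_(u | P u) F u =
  ((if P (inl ord0) then F (inl ord0) else 0)
  + (if P (inl (@Ordinal 4 1 isT)) then F (inl (@Ordinal 4 1 isT)) else 0)
  + (if P (inl (@Ordinal 4 2 isT)) then F (inl (@Ordinal 4 2 isT)) else 0)
  + (if P (inl (@Ordinal 4 3 isT)) then F (inl (@Ordinal 4 3 isT)) else 0))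
  + ((\sum_(i < p1) if P (inr (inl i)) then F (inr (inl i)) else 0)
  + ((\sum_(i < p2) if P (inr (inr (inl i))) then F (inr (inr (inl i))) else 0)
  + (\sum_(i < p3) if P (inr (inr (inr i))) then F (inr (inr (inr i))) else 0))).
Proof.
rewrite big_mkcond big_sumType /= big_sumType big_sumType /=.
rewrite !big_ord_recl big_ord0 addr0 !addrA.
have -> : (lift ord0 (lift ord0 (lift ord0 ord0)) : 'I_4) = @Ordinal 4 3 isT by apply: val_inj.
have -> : (lift ord0 (lift ord0 ord0) : 'I_4) = @Ordinal 4 2 isT by apply: val_inj.
have -> : (lift ord0 ord0 : 'I_4) = @Ordinal 4 1 isT by apply: val_inj.
by [].
Qed.

Lemma reach2 (T : finType) (e : rel T) u v w :
  (u == v) || e u v || (e u w && e w v) -> reach e 2 u v.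
Proof.
case/orP=> [/orP [H|H]|/andP [H1 H2]] /=.
- by rewrite H.
- apply/orP; left; apply/orP; right; apply/existsP; exists u; by rewrite eqxx H.
- apply/orP; right; apply/existsP; exists w; rewrite H2 andbT.
  apply/orP; right; apply/existsP; exists u; by rewrite eqxx H1.
Qed.

Lemma diam0 : ~ has_diameter (@M2adj 0 0 0) 3.
Proof.
move=> [_ [u [v]]]; apply/negP/negPn.
apply: (reach2 _ _ _ _ (inl ord0)).
case: u => [[[|[|[|[|?]]]] Hi]|[[]|[[]|[]]]] //;
case: v => [[[|[|[|[|?]]]] Hj]|[[]|[[]|[]]]] //.
Qed.

Lemma zero_seq (A : zmodType) (h : A) : h != 0 -> h *+ 2 != 0 ->
  forall n, (2 <= n)%N -> exists s : seq A,
    [/\ size s = n, all (fun x => x != 0) s & \sum_(x <- s) x = 0].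
Proof.
move=> Hh H2 n; elim/ltn_ind: n => -[|[|[|[|n]]]] IH // _.
- exists [:: h; - h]; rewrite /= oppr_eq0 Hh !big_cons big_nil addr0 subrr.
  by [].
- exists [:: h; h; - (h *+ 2)]; rewrite /= oppr_eq0 Hh H2 !big_cons big_nil.
  by rewrite addr0 addrA -mulr2n subrr.
- have [|s [Hs Ha Hsum]] := IH n.+2 (leqnSn _ : (n.+2 < n.+4)%N) => //.
  exists [:: h, - h & s]; rewrite /= Hs oppr_eq0 Hh Ha !big_cons Hsum.
  by rewrite addr0 subrr.
Qed.

Theorem proposition4p2 (A : finZmodType) (p1 p2 p3 : nat) :
  (3 <= #|A|)%N ->
  has_diameter (@M2adj p1 p2 p3) 3 ->
  (vertex_magic (@M2adj p1 p2 p3) A <->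
   [/\ p1 = 0%N, p3 = 0%N, (2 <= p2)%N & exists g : A, is_square g]).
Proof.
move=> HA Hd; split.
- case=> l [Hl [mu Hmu]].
  have E4 := Hmu (inl (@Ordinal 4 3 isT)).
  rewrite sumM2 /= !big1_eq !(addr0, add0r) in E4.
  have p10 : p1 = 0%N.
    case: (posnP p1) => // Hp.
    have Ep := Hmu (inr (inl (Ordinal Hp))).
    rewrite sumM2 /= !big1_eq !(addr0, add0r) in Ep.
    have : l (inl (@Ordinal 4 2 isT)) = 0.
      by apply: (addrI (l (inl ord0))); rewrite addr0 E4 Ep.
    by move: (Hl (inl (@Ordinal 4 2 isT))) => /[swap] ->; rewrite eqxx.
  have p30 : p3 = 0%N.
    case: (posnP p3) => // Hp.
    have Ep := Hmu (inr (inr (inr (Ordinal Hp)))).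
    rewrite sumM2 /= !big1_eq !(addr0, add0r) in Ep.
    have : l (inl ord0) = 0.
      by apply: (addIr (l (inl (@Ordinal 4 2 isT)))); rewrite add0r E4 Ep.
    by move: (Hl (inl ord0)) => /[swap] ->; rewrite eqxx.
  subst p1 p3.
  have Hp2 : (0 < p2)%N.
    case: (posnP p2) => // H0; subst p2; by case: (diam0 Hd).
  have E1 := Hmu (inl (@Ordinal 4 0 isT)).
  have E2 := Hmu (inl (@Ordinal 4 1 isT)).
  have E3 := Hmu (inl (@Ordinal 4 2 isT)).
  have Ep := Hmu (inr (inr (inl (Ordinal Hp2)))).
  rewrite sumM2 /= !big_ord0 ?big1_eq !(addr0, add0r) in E1.
  rewrite sumM2 /= !big_ord0 ?big1_eq !(addr0, add0r) in E2.
  rewrite sumM2 /= !big_ord0 ?big1_eq !(addr0, add0r) in E3.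
  rewrite sumM2 /= !big_ord0 ?big1_eq !(addr0, add0r) in Ep.
  set a := l (inl ord0) in E1 E2 E3 E4 Ep.
  set b := l (inl (@Ordinal 4 1 isT)) in E1 E2 E3 E4 Ep.
  set c := l (inl (@Ordinal 4 2 isT)) in E1 E2 E3 E4 Ep.
  set d := l (inl (@Ordinal 4 3 isT)) in E1 E2 E3 E4 Ep.
  have HS : \sum_(i < p2) l (inr (inr (inl i))) = 0.
    by apply: (addrI (a + c)); rewrite addr0 E2 E4.
  split => //.
  + rewrite ltn_neqAle Hp2 andbT; apply/eqP => H1; subst p2.
    rewrite big_ord1 in HS.
    by move: (Hl (inr (inr (inl ord0)))); rewrite HS eqxx.
  + exists mu; split; first by rewrite -Ep Hl.
    exists a.
    have H23 : c + d = 0 by apply: (addrI b); rewrite addr0 addrA E1 Ep.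
    have H03 : a + d = 0 by apply: (addrI b); rewrite addr0 addrA (addrC b a) E3 Ep.
    have -> : mu = a + c by rewrite E4.
    have -> : c = a by apply: (addIr d); rewrite H23 H03.
    by rewrite mulr2n.
- move=> [? ? Hp2 [g [Hg [h Hgh]]]]; subst p1 p3.
  have Hh : h != 0 by apply: contraNneq Hg => Hh0; rewrite Hgh Hh0 mul0rn.
  have H2 : h *+ 2 != 0 by rewrite -Hgh.
  have [s [Hs Ha Hsum]] := zero_seq _ _ Hh H2 _ Hp2.
  subst p2.
  rewrite (big_nth 0) big_mkord in Hsum.
  pose l := fun x : M2V 0 (size s) 0 => match x with
    | inl i => nth 0 [:: h; g; h; - h] i
    | inr (inl _) => 0
    | inr (inr (inl q)) => nth 0 s q
    | inr (inr (inr _)) => 0 end.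
  exists l; split.
  + case=> [[[|[|[|[|?]]]] Hi]|[[]|[q|[]]]] //=; rewrite ?oppr_eq0 //.
    exact: (allP Ha) _ (mem_nth 0 (ltn_ord q)).
  + exists g.
    case=> [[[|[|[|[|?]]]] Hi]|[[]|[q|[]]]] //=; rewrite sumM2 /= !big_ord0 ?big1_eq /= ?(addr0, add0r) //.
    * by rewrite addrK.
    * by rewrite Hsum addr0 -mulr2n Hgh.
    * by rewrite (addrC h g) addrK.
Qed.
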